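(* Let $n \ge 3$ be an integer and let $I$ be a degree-based topological index with coefficients $c_{12},c_{13},c_{22},c_{23},c_{33}$. Define $c'_{12} = c_{12}-4c_{22}+3c_{23}$, $c'_{13} = c_{13}-3c_{22}+2c_{23}$, $c'_{33} = c_{22}-2c_{23}+c_{33}$. If $c'_{13}<c'_{12}<-c'_{33}<0$, then the path $P_n$ on $n$ vertices is, up to isomorphism, the only tree in $\mathcal{G}_3(n,n-1)$ that maximizes $I$.
   Context: For integers $n,m$, $\mathcal{G}_3(n,m)$ denotes the set of simple connected undirected graphs (chemical graphs) with $n$ vertices, $m$ edges and maximum degree at most $3$; in particular $\mathcal{G}_3(n,n-1)$ is the set of trees of order $n$ with maximum degree at most $3$. For a graph $G$ and $1\le i\le j$, an $ij$-edge is an edge whose endpoints have degrees $i$ and $j$, and $m_{ij}$ denotes the number of $ij$-edges of $G$. A degree-based topological index $I$ is a function on chemical graphs of order $n\ge 3$ of the form $I(G)=c_{12}m_{12}+c_{13}m_{13}+c_{22}m_{22}+c_{23}m_{23}+c_{33}m_{33}$, where the $c_{ij}$ are fixed real numbers. *)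

(* Defs.v *)
From mathcomp Require Import all_boot all_order all_fingroup all_algebra.
Set Implicit Arguments. Unset Strict Implicit. Unset Printing Implicit Defensive.
Import Order.TTheory GRing.Theory Num.Theory.

Definition simple_graph (n : nat) (e : rel 'I_n) : Prop :=
  symmetric e /\ irreflexive e.

Definition deg (n : nat) (e : rel 'I_n) (x : 'I_n) : nat := #|[set y | e x y]|.

Definition nedges (n : nat) (e : rel 'I_n) : nat :=
  #|[set p : 'I_n * 'I_n | (p.1 < p.2)%N && e p.1 p.2]|.

Definition connected_graph (n : nat) (e : rel 'I_n) : Prop :=
  forall x y : 'I_n, connect e x y.

(* G in G_3(n,m): simple, connected, n vertices, m edges, max degree <= 3 *)
Definition chemical_graph (n m : nat) (e : rel 'I_n) : Prop :=
  [/\ simple_graph e, connected_graph e, nedges e = m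
    & forall x, (deg e x <= 3)%N].

Definition mij (n : nat) (e : rel 'I_n) (i j : nat) : nat :=
  #|[set p : 'I_n * 'I_n | [&& (p.1 < p.2)%N, e p.1 p.2 &
      ((deg e p.1 == i) && (deg e p.2 == j))
      || ((deg e p.1 == j) && (deg e p.2 == i))]]|.

Definition topo_index (R : numDomainType) (c12 c13 c22 c23 c33 : R)
  (n : nat) (e : rel 'I_n) : R :=
  (c12 * (mij e 1 2)%:R + c13 * (mij e 1 3)%:R + c22 * (mij e 2 2)%:R
   + c23 * (mij e 2 3)%:R + c33 * (mij e 3 3)%:R)%R.

Definition path_graph (n : nat) : rel 'I_n :=
  fun x y => ((x : nat).+1 == y) || ((y : nat).+1 == x).

Definition graph_iso (n : nat) (e1 e2 : rel 'I_n) : Prop :=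
  exists f : {perm 'I_n}, forall x y, e1 x y = e2 (f x) (f y).

Arguments chemical_graph n m e : clear implicits.
Arguments path_graph n : clear implicits.

(* Main.v *)
Require Import Defs.
From mathcomp Require Import all_boot all_order all_fingroup all_algebra.
From mathcomp Require Import zify ring lra.
Set Implicit Arguments. Unset Strict Implicit. Unset Printing Implicit Defensive.
Import Order.TTheory GRing.Theory Num.Theory.


Lemma card_pairs (n : nat) (P : 'I_n -> 'I_n -> bool) :
  #|[set p : 'I_n * 'I_n | P p.1 p.2]| = \sum_(x : 'I_n) \sum_(y : 'I_n) (P x y : nat).
Proof.
rewrite pair_bigA -sum1_card big_mkcond /=; apply: eq_bigr => p _.
by rewrite inE; case: (P _ _).
Qed.

Lemma deg_sum (n : nat) (e : rel 'I_n) x : deg e x = \sum_(y : 'I_n) (e x y : nat).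
Proof.
rewrite /deg -sum1_card big_mkcond /=; apply: eq_bigr => y _.
by rewrite inE; case: (e x y).
Qed.

Lemma sym_split (n : nat) (A : 'I_n -> 'I_n -> bool) :
  (forall x, A x x = false) ->
  \sum_(x : 'I_n) \sum_(y : 'I_n) (((x < y)%N && A x y) : nat) + \sum_(x : 'I_n) \sum_(y : 'I_n) (((x < y)%N && A y x) : nat)
  = \sum_(x : 'I_n) \sum_(y : 'I_n) (A x y : nat).
Proof.
move=> Hd; rewrite [X in _ + X = _]exchange_big /= -big_split /=.
apply: eq_bigr => x _; rewrite -big_split /=; apply: eq_bigr => y _.
case: (ltngtP x y) => H; rewrite /= ?addn0 ?add0n //.
have -> : x = y by apply: val_inj.
by rewrite Hd.
Qed.


Definition NN (n : nat) (e : rel 'I_n) (i j : nat) : nat :=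
  \sum_(x : 'I_n) \sum_(y : 'I_n) ((e x y && (deg e x == i)) && (deg e y == j) : nat).
Definition ncls (n : nat) (e : rel 'I_n) (k : nat) : nat := #|[set x | deg e x == k]|.

Lemma ncls_sum (n : nat) (e : rel 'I_n) k :
  ncls e k = \sum_(x : 'I_n) ((deg e x == k) : nat).
Proof. by rewrite /ncls -sum1_card big_mkcond /=; apply: eq_bigr => x _; rewrite inE; case: (_ == _). Qed.

Lemma class_count (n : nat) (e : rel 'I_n) k :
  (forall x, 1 <= deg e x <= 3) ->
  k * ncls e k = NN e k 1 + NN e k 2 + NN e k 3.
Proof.
move=> Hd; rewrite ncls_sum big_distrr /= /NN -!big_split /=.
apply: eq_bigr => x _; rewrite -!big_split /=.
case: eqP => Hk /=.
  rewrite muln1 -Hk deg_sum; apply: eq_bigr => y _.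
  case: (e x y) => //=; have := Hd y; case: (deg e y) => [|[|[|[|m]]]] //.
by rewrite muln0 big1 // => y _; rewrite andbF.
Qed.

Lemma NN_sym (n : nat) (e : rel 'I_n) i j : symmetric e -> NN e i j = NN e j i.
Proof.
move=> Hs; rewrite /NN exchange_big /=; apply: eq_bigr => x _; apply: eq_bigr => y _.
by rewrite Hs; case: (e x y); case: (_ == _); case: (_ == _).
Qed.

Lemma n_split (n : nat) (e : rel 'I_n) :
  (forall x, 1 <= deg e x <= 3) -> n = ncls e 1 + ncls e 2 + ncls e 3.
Proof.
move=> Hd; rewrite !ncls_sum -!big_split /=.
rewrite -{1}(card_ord n) -sum1_card; apply: eq_bigr => x _.
by have := Hd x; case: (deg e x) => [|[|[|[|m]]]].
Qed.

Lemma degsum_cls (n : nat) (e : rel 'I_n) :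
  (forall x, 1 <= deg e x <= 3) ->
  \sum_(x : 'I_n) deg e x = ncls e 1 + 2 * ncls e 2 + 3 * ncls e 3.
Proof.
move=> Hd; rewrite !ncls_sum !big_distrr -!big_split /=; apply: eq_bigr => x _.
by have := Hd x; case: (deg e x) => [|[|[|[|m]]]].
Qed.

Lemma nedges_sum (n : nat) (e : rel 'I_n) :
  nedges e = \sum_(x : 'I_n) \sum_(y : 'I_n) (((x < y)%N && e x y) : nat).
Proof. exact: (card_pairs (fun x y => (x < y)%N && e x y)). Qed.

Lemma handshake (n : nat) (e : rel 'I_n) : simple_graph e ->
  \sum_(x : 'I_n) deg e x = 2 * nedges e.
Proof.
move=> [Hs Hi]; rewrite nedges_sum mul2n -addnn.
have E : \sum_(x : 'I_n) \sum_(y : 'I_n) (((x < y)%N && e x y) : nat) =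
         \sum_(x : 'I_n) \sum_(y : 'I_n) (((x < y)%N && e y x) : nat).
  by apply: eq_bigr => x _; apply: eq_bigr => y _; rewrite Hs.
rewrite {2}E sym_split; last by move=> x; apply: Hi.
by apply: eq_bigr => x _; rewrite deg_sum.
Qed.

Lemma mij_sum (n : nat) (e : rel 'I_n) i j : mij e i j =
  \sum_(x : 'I_n) \sum_(y : 'I_n) (((x < y)%N && (e x y &&
      (((deg e x == i) && (deg e y == j)) || ((deg e x == j) && (deg e y == i))))) : nat).
Proof. exact: (card_pairs (fun x y => (x < y)%N && (e x y &&
      (((deg e x == i) && (deg e y == j)) || ((deg e x == j) && (deg e y == i)))))). Qed.

Lemma mij_neq (n : nat) (e : rel 'I_n) i j : simple_graph e -> i != j ->
  mij e i j = NN e i j.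
Proof.
move=> [Hs Hi] Hij; rewrite mij_sum /NN.
rewrite -(@sym_split n (fun x y => (e x y && (deg e x == i)) && (deg e y == j))); last by move=> x; rewrite Hi.
rewrite -big_split /=; apply: eq_bigr => x _; rewrite -big_split /=; apply: eq_bigr => y _.
rewrite (Hs y x).
case: (x < y)%N => //=; case: (e x y) => //=.
move: (deg e x) (deg e y) => a b.
case: (a =P i); case: (b =P j); case: (a =P j); case: (b =P i) => //= *; subst => //.
all: by rewrite eqxx in Hij.
Qed.

Lemma mii (n : nat) (e : rel 'I_n) i : simple_graph e ->
  2 * mij e i i = NN e i i.
Proof.
move=> [Hs Hi]; rewrite mul2n -addnn mij_sum /NN.
rewrite -(@sym_split n (fun x y => (e x y && (deg e x == i)) && (deg e y == i))); last by move=> x; rewrite Hi.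
congr (_ + _); apply: eq_bigr => x _; apply: eq_bigr => y _;
  rewrite ?(Hs y x); case: (x < y)%N; case: (e x y); case: (_ == _); case: (_ == _) => //.
Qed.


Fixpoint inb (n : nat) (e : rel 'I_n) (r : 'I_n) (k : nat) (v : 'I_n) : bool :=
  if k is k'.+1 then inb e r k' v || [exists u, inb e r k' u && e u v] else v == r.

Lemma inb_path (n : nat) (e : rel 'I_n) r p :
  path e r p -> inb e r (size p) (last r p).
Proof.
elim/last_ind: p => [|p y IH] /=; first by rewrite eqxx.
rewrite rcons_path size_rcons last_rcons => /andP [Hp He] /=.
apply/orP; right; apply/existsP; exists (last r p); by rewrite IH.
Qed.

Lemma inb_le (n : nat) (e : rel 'I_n) r k k' v : inb e r k v -> (k <= k')%N -> inb e r k' v.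
Proof.
move=> H; elim: k' => [|k' IH]; first by rewrite leqn0 => /eqP <-.
rewrite leq_eqVlt => /orP [/eqP <- //|Hk] /=.
by rewrite IH.
Qed.

Lemma dist_ex (n : nat) (e : rel 'I_n) r v : exists k, inb e r k v || (n <= k)%N.
Proof. by exists n; rewrite leqnn orbT. Qed.

Definition dist (n : nat) (e : rel 'I_n) r v := ex_minn (dist_ex e r v).

Lemma short_inb (n : nat) (e : rel 'I_n) r v : connect e r v ->
  exists k, inb e r k v && (k < n)%N.
Proof.
case/connectP => p Hp ->; case/shortenP: Hp => p' Hp' Hu _.
exists (size p'); rewrite inb_path //=.
have := card_uniqP Hu; rewrite /= => Hc.
have := max_card (mem (r :: p')); rewrite card_ord Hc /=.
by [].
Qed.

Lemma dist_min (n : nat) (e : rel 'I_n) r v k : inb e r k v -> (dist e r v <= k)%N.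
Proof. by rewrite /dist; case: ex_minnP => m Hm Hmin Hk; apply: Hmin; rewrite Hk. Qed.

Lemma dist_inb (n : nat) (e : rel 'I_n) r v : connect e r v ->
  inb e r (dist e r v) v /\ (dist e r v < n)%N.
Proof.
move=> /short_inb [k /andP [Hk Hkn]].
have Hd := dist_min Hk.
move: Hd; rewrite /dist; case: ex_minnP => m Hm Hmin Hmk.
case/orP: Hm => [->|Hm]; first by split => //; apply: leq_ltn_trans Hkn.
by have := leq_trans Hm Hmk; rewrite leqNgt Hkn.
Qed.

Lemma dist0 (n : nat) (e : rel 'I_n) r v : connect e r v -> dist e r v = 0%N -> v = r.
Proof. by move=> /dist_inb [H _] Hd; move: H; rewrite Hd /= => /eqP. Qed.

Lemma dist_r (n : nat) (e : rel 'I_n) r : dist e r r = 0%N.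
Proof. by apply/eqP; rewrite -leqn0; apply: (@dist_min _ _ _ _ 0); rewrite /= eqxx. Qed.

Lemma dist_edge (n : nat) (e : rel 'I_n) r u v : connect e r u -> e u v ->
  (dist e r v <= (dist e r u).+1)%N.
Proof.
move=> /dist_inb [Hu _] He; apply: dist_min => /=.
by apply/orP; right; apply/existsP; exists u; rewrite Hu.
Qed.

Lemma dist_par_ex (n : nat) (e : rel 'I_n) r v :
  (forall x, connect e r x) -> v != r ->
  exists u, e u v && ((dist e r u).+1 == dist e r v).
Proof.
move=> Hc Hv; have [H _] := dist_inb (Hc v).
case Hd: (dist e r v) H => [|k] /=; first by rewrite (negbTE Hv).
case/orP => [H|/existsP [u /andP [Hu He]]].
  by have := dist_min H; rewrite Hd ltnn.
exists u; rewrite He /=.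
have H1 := dist_min Hu; have H2 := dist_edge (Hc u) He.
by apply/eqP; lia.
Qed.

Definition par (n : nat) (e : rel 'I_n) r v :=
  odflt r [pick u | e u v && ((dist e r u).+1 == dist e r v)].

Lemma par_spec (n : nat) (e : rel 'I_n) r v :
  (forall x, connect e r x) -> v != r ->
  e (par e r v) v /\ (dist e r (par e r v)).+1 = dist e r v.
Proof.
move=> Hc Hv; rewrite /par; case: pickP => [u /andP [H1 /eqP H2] //|H].
by have [u Hu] := dist_par_ex Hc Hv; rewrite H in Hu.
Qed.


Definition gpar (n : nat) (e : rel 'I_n) r (v : 'I_n) : 'I_n * 'I_n :=
  if (v < par e r v)%N then (v, par e r v) else (par e r v, v).

Definition Eset (n : nat) (e : rel 'I_n) :=
  [set p : 'I_n * 'I_n | (p.1 < p.2)%N && e p.1 p.2].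

Lemma gpar_E (n : nat) (e : rel 'I_n) r :
  simple_graph e -> (forall x, connect e r x) -> nedges e = n.-1 ->
  [set gpar e r v | v in [set~ r]] = Eset e.
Proof.
move=> [Hs Hi] Hc Hm; apply/eqP; rewrite eqEcard; apply/andP; split.
  apply/subsetP => p /imsetP [v]; rewrite !inE => Hv ->.
  have [He Hd] := par_spec Hc Hv.
  rewrite /gpar; case: (ltngtP v (par e r v)) => H /=; rewrite ?H ?He ?(Hs v) //.
  move/val_inj: H => H; rewrite -H in Hd; lia.
rewrite (@card_in_imset _ _ (gpar e r)); first by rewrite cardsC1 card_ord -Hm.
move=> v w; rewrite !inE => Hv Hw.
have [_ Hdv] := par_spec Hc Hv; have [_ Hdw] := par_spec Hc Hw.
rewrite /gpar; case: ifP => _; case: ifP => _ [] E1 E2 //.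
- by rewrite E2 in Hdv; rewrite -E1 in Hdw; lia.
- by rewrite E1 in Hdv; rewrite -E2 in Hdw; lia.
Qed.

Lemma tree_edge_lt (n : nat) (e : rel 'I_n) r (x y : 'I_n) :
  simple_graph e -> (forall x, connect e r x) -> nedges e = n.-1 ->
  (x < y)%N -> e x y ->
  (x != r /\ par e r x = y) \/ (y != r /\ par e r y = x).
Proof.
move=> Hg Hc Hm Hxy He.
have : (x, y) \in Eset e by rewrite inE /= Hxy He.
rewrite -(gpar_E Hg Hc Hm) => /imsetP [v]; rewrite !inE => Hv.
rewrite /gpar; case: ifP => _ [] E1 E2.
  by left; rewrite E1 E2; split.
by right; rewrite E1 E2; split.
Qed.

Lemma tree_edge (n : nat) (e : rel 'I_n) r (x y : 'I_n) :
  simple_graph e -> (forall x, connect e r x) -> nedges e = n.-1 ->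
  e x y ->
  (x != r /\ par e r x = y) \/ (y != r /\ par e r y = x).
Proof.
move=> Hg Hc Hm He; have [Hs Hi] := Hg.
case: (ltngtP x y) => H.
- exact: tree_edge_lt.
- by rewrite Hs in He; case: (tree_edge_lt Hg Hc Hm H He); [right|left].
- by move/val_inj: H => H; rewrite H Hi in He.
Qed.

Lemma m33_le (n : nat) (e : rel 'I_n) r :
  simple_graph e -> (forall x, connect e r x) -> nedges e = n.-1 ->
  (mij e 3 3 <= #|[set x | deg e x == 3]|)%N.
Proof.
move=> Hg Hc Hm.
apply: (@leq_trans #|[set gpar e r v | v in [set v | (v != r) && (deg e v == 3)]]|).
  apply: subset_leq_card; apply/subsetP => p; rewrite inE => /and3P [Hlt He Hdeg].
  have Hd : (deg e p.1 == 3) && (deg e p.2 == 3) by case/orP: Hdeg.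
  case/andP: Hd => Hd1 Hd2.
  case: (tree_edge_lt Hg Hc Hm Hlt He) => [[Hv Hp]|[Hv Hp]]; apply/imsetP.
    exists p.1; first by rewrite inE Hv Hd1.
    by rewrite /gpar Hp Hlt -surjective_pairing.
  exists p.2; first by rewrite inE Hv Hd2.
  by rewrite /gpar Hp ltnNge (ltnW Hlt) -surjective_pairing.
apply: leq_trans (leq_imset_card _ _) _; apply: subset_leq_card.
by apply/subsetP => v; rewrite !inE => /andP [].
Qed.


Lemma exists_other (n : nat) (A : {set 'I_n}) : (#|A| < n)%N -> exists z, z \notin A.
Proof.
move=> H; have : (0 < #|~: A|)%N by rewrite cardsCs setCK card_ord; lia.
by rewrite card_gt0 => /set0Pn [z]; rewrite inE => Hz; exists z.
Qed.

Lemma deg_ge1 (n : nat) (e : rel 'I_n) x : (2 <= n)%N -> connected_graph e ->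
  (1 <= deg e x)%N.
Proof.
move=> Hn Hc.
have [y Hy] : exists y, y \notin [set x] by apply: exists_other; rewrite cards1.
have := Hc x y; case/connectP => [[|z p]] /=.
  by move=> _ Exy; rewrite Exy inE eqxx in Hy.
case/andP => Hz _ _; rewrite /deg card_gt0; apply/set0Pn; exists z; by rewrite inE.
Qed.

Lemma nbr1 (n : nat) (e : rel 'I_n) x y : e x y -> deg e x = 1%N ->
  forall z, e x z -> z = y.
Proof.
move=> Hy Hd z Hz; move/eqP: Hd => /cards1P [w Hw].
have : y \in [set z | e x z] by rewrite inE.
have : z \in [set z | e x z] by rewrite inE.
by rewrite Hw !inE => /eqP -> /eqP ->.
Qed.

Lemma no11 (n : nat) (e : rel 'I_n) x y : (3 <= n)%N -> simple_graph e ->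
  connected_graph e -> e x y -> deg e x = 1%N -> deg e y = 1%N -> False.
Proof.
move=> Hn [Hs Hi] Hc Hxy Hdx Hdy.
have Hyx : e y x by rewrite Hs.
have Nx := nbr1 Hxy Hdx; have Ny := nbr1 Hyx Hdy.
have Hcl : closed e [set x; y].
  move=> u v Huv; have Hvu : e v u by rewrite Hs.
  rewrite !inE; apply/idP/idP => /orP [] /eqP Eu; subst.
  - by rewrite (Nx _ Huv) eqxx orbT.
  - by rewrite (Ny _ Huv) eqxx.
  - by rewrite (Nx _ Hvu) eqxx orbT.
  - by rewrite (Ny _ Hvu) eqxx.
have [z Hz] : exists z, z \notin [set x; y].
  by apply: exists_other; rewrite cards2; case: (x != y); lia.
have := closed_connect Hcl (Hc x z).
by move: Hz; rewrite !inE eqxx /= => /negbTE ->.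
Qed.

Lemma NN11 (n : nat) (e : rel 'I_n) : (3 <= n)%N -> simple_graph e ->
  connected_graph e -> NN e 1 1 = 0%N.
Proof.
move=> Hn Hg Hc; rewrite /NN big1 // => x _; rewrite big1 // => y _.
case Hxy: (e x y) => //=; case: eqP => //= Hx; case: eqP => //= Hy.
by case: (no11 Hn Hg Hc Hxy Hx Hy).
Qed.


Lemma tree_identities (n : nat) (e : rel 'I_n) : (3 <= n)%N -> chemical_graph n n.-1 e ->
 [/\ (mij e 2 2 + 4 * mij e 1 2 + 3 * mij e 1 3 = n + 5 + mij e 3 3)%N,
     (mij e 2 3 + 6 + 2 * mij e 3 3 = 3 * mij e 1 2 + 2 * mij e 1 3)%N,
     (mij e 1 2 + mij e 1 3 = ncls e 3 + 2)%N,
     (mij e 3 3 <= ncls e 3)%N &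
     (ncls e 3 = 0 -> mij e 1 3 = 0 /\ mij e 3 3 = 0)%N].
Proof.
move=> Hn [Hg Hc Hm Hd3].
have Hd : forall x, (1 <= deg e x <= 3)%N.
  by move=> x; rewrite Hd3 andbT; apply: deg_ge1 => //; lia.
have C1 := class_count 1 Hd; have C2 := class_count 2 Hd; have C3 := class_count 3 Hd.
have S12 := NN_sym 1 2 (proj1 Hg); have S13 := NN_sym 1 3 (proj1 Hg);
have S23 := NN_sym 2 3 (proj1 Hg).
have Z11 := NN11 Hn Hg Hc.
have Hns := n_split Hd.
have Hh := handshake Hg; rewrite degsum_cls // Hm in Hh.
have M12 := @mij_neq n e 1 2 Hg isT; have M13 := @mij_neq n e 1 3 Hg isT.
have M23 := @mij_neq n e 2 3 Hg isT.
have M22 := mii 2 Hg; have M33 := mii 3 Hg.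
have r : 'I_n by exists 0%N; lia.
have L33 := @m33_le n e r Hg (fun x => Hc r x) Hm; rewrite -/(ncls e 3) in L33.
split; lia.
Qed.


Lemma sum_ord_eq (n k : nat) : \sum_(y : 'I_n) (((y : nat) == k) : nat) = (k < n)%N.
Proof.
case: (ltnP k n) => H.
  rewrite (bigD1 (Ordinal H)) //= eqxx big1 // => y Hy.
  case: eqP => // E; move: Hy; rewrite (_ : y = Ordinal H) ?eqxx //; exact: val_inj.
rewrite big1 // => y _; case: eqP => // E; have := ltn_ord y; rewrite /= in E; lia.
Qed.

Lemma path_simple (n : nat) : simple_graph (path_graph n).
Proof.
split; first by move=> x y; rewrite /path_graph orbC.
by move=> x; rewrite /path_graph; case: eqP => //= H; lia.
Qed.

Lemma path_deg (n : nat) x : (deg (path_graph n) x <= 2)%N.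
Proof.
rewrite deg_sum.
apply: (@leq_trans (\sum_(y : 'I_n) ((((y : nat) == x.+1) : nat) + (((y : nat) == x.-1) : nat)))).
  apply: leq_sum => y _; rewrite /path_graph.
  case: eqP => H1; case: eqP => H2; case: eqP => H3; case: eqP => H4 //=; lia.
rewrite big_split /= !sum_ord_eq; case: (_ < n)%N; case: (_ < n)%N => //.
Qed.

Lemma path_conn (n : nat) : connected_graph (path_graph n).
Proof.
case: n => [|n]; first by move=> [].
have H0 : forall k (hk : (k < n.+1)%N), connect (path_graph n.+1) ord0 (Ordinal hk).
  elim => [hk|k IH hk]; first by rewrite (_ : Ordinal hk = ord0) //; exact: val_inj.
  have hk' : (k < n.+1)%N by lia.
  apply: connect_trans (IH hk') _; apply: connect1; by rewrite /path_graph /= eqxx.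
have Hs : connect_sym (path_graph n.+1) by apply: sym_connect_sym; case: (path_simple n.+1).
move=> x y; apply: (@connect_trans _ _ ord0).
  rewrite Hs; case: x => x hx; exact: H0.
case: y => y hy; exact: H0.
Qed.

Lemma path_nedges (n : nat) : nedges (path_graph n) = n.-1.
Proof.
rewrite nedges_sum.
transitivity (\sum_(x : 'I_n) \sum_(y : 'I_n) (((y : nat) == x.+1) : nat)).
  apply: eq_bigr => x _; apply: eq_bigr => y _; rewrite /path_graph.
  case: eqP => H1; case: eqP => H2; case: ltnP => H3 //=; lia.
under eq_bigr => x _ do rewrite sum_ord_eq.
case: n => [|n]; first by rewrite big_ord0.
rewrite big_ord_recr /= ltnn addn0.
rewrite (eq_bigr (fun _ => 1%N)); last by move=> i _; rewrite /= ltnS ltn_ord.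
by rewrite sum_nat_const card_ord muln1.
Qed.

Lemma path_chem (n : nat) : chemical_graph n n.-1 (path_graph n).
Proof.
split; [exact: path_simple|exact: path_conn|exact: path_nedges|].
by move=> x; apply: leq_trans (path_deg x) _.
Qed.


Lemma exists_leaf (n : nat) (e : rel 'I_n) : (3 <= n)%N -> chemical_graph n n.-1 e ->
  exists r, (deg e r <= 1)%N.
Proof.
move=> Hn [Hg Hc Hm _].
case: (pickP (fun r => (deg e r <= 1)%N)) => [r Hr|H]; first by exists r.
have := handshake Hg; rewrite Hm => Hh.
have : (\sum_(x : 'I_n) 2 <= \sum_(x : 'I_n) deg e x)%N.
  by apply: leq_sum => x _; have := H x; rewrite /=; lia.
by rewrite sum_nat_const card_ord Hh; lia.
Qed.

Lemma dist_inj (n : nat) (e : rel 'I_n) r : simple_graph e ->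
  (forall x, connect e r x) -> (deg e r <= 1)%N -> (forall x, deg e x <= 2)%N ->
  forall k u v, dist e r u = k -> dist e r v = k -> u = v.
Proof.
move=> [Hs Hi] Hc Hr Hd2; elim => [|k IH] u v Hu Hv.
  by rewrite (dist0 (Hc u) Hu) (dist0 (Hc v) Hv).
have Hur : u != r by apply/eqP => E; rewrite E dist_r in Hu.
have Hvr : v != r by apply/eqP => E; rewrite E dist_r in Hv.
have [Peu Pdu] := par_spec Hc Hur; have [Pev Pdv] := par_spec Hc Hvr.
have Ew : par e r u = par e r v by apply: IH; lia.
case: (eqVneq u v) => // Huv.
set w := par e r u in Peu Pdu Ew.
have Hwu : e w u by [].
have Hwv : e w v by rewrite Ew.
case: (eqVneq w r) => Hwr.
  have : (#|[set u; v]| <= deg e w)%N.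
    by apply: subset_leq_card; apply/subsetP => z; rewrite !inE => /orP [] /eqP ->.
  by rewrite cards2 Huv Hwr; lia.
have [Pew Pdw] := par_spec Hc Hwr.
have : (#|par e r w |: [set u; v]| <= deg e w)%N.
  apply: subset_leq_card; apply/subsetP => z; rewrite !inE => /orP [/eqP ->|/orP [] /eqP ->] //.
  by rewrite Hs.
rewrite cardsU1 cards2 Huv !inE.
have -> : (par e r w == u) = false by apply/eqP => E; rewrite E in Pdw; lia.
have -> : (par e r w == v) = false by apply/eqP => E; rewrite E in Pdw; lia.
by have := Hd2 w; lia.
Qed.

Lemma iso_path (n : nat) (e : rel 'I_n) : (3 <= n)%N -> chemical_graph n n.-1 e ->
  (forall x, deg e x <= 2)%N -> graph_iso e (path_graph n).
Proof.
move=> Hn Hch Hd2; have [r Hr] := exists_leaf Hn Hch.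
case: Hch => Hg Hc Hm _.
have Hcr : forall x, connect e r x by move=> x; apply: Hc.
have Hinj := dist_inj Hg Hcr Hr Hd2.
pose f (v : 'I_n) : 'I_n := Ordinal (proj2 (dist_inb (Hcr v))).
have finj : injective f.
  by move=> u v /(congr1 val) /= H; apply: (Hinj _ u v H).
exists (perm finj) => x y; rewrite !permE /path_graph /=.
apply/idP/idP.
  move=> He; case: (tree_edge Hg Hcr Hm He) => [[Hx Hp]|[Hy Hp]].
    by have [_ Hd] := par_spec Hcr Hx; rewrite -Hd Hp eqxx orbT.
  by have [_ Hd] := par_spec Hcr Hy; rewrite -Hd Hp eqxx.
have key : forall a b, (dist e r a).+1 = dist e r b -> e a b.
  move=> a b Hab.
  have Hbr : b != r by apply/eqP => E; rewrite E dist_r in Hab.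
  have [Pe Pd] := par_spec Hcr Hbr.
  have -> : a = par e r b by apply: (Hinj _ a (par e r b) erefl); lia.
  exact: Pe.
case/orP => /eqP H; first exact: key.
by rewrite (proj1 Hg); apply: key.
Qed.


Local Open Scope ring_scope.

Lemma natR_eq (R : realFieldType) (a b : nat) : a = b -> (a%:R : R) = b%:R.
Proof. by move=> ->. Qed.

Unset Implicit Arguments.

Theorem theorem1 (R : realFieldType) (n : nat) (c12 c13 c22 c23 c33 : R) :
  (3 <= n)%N ->
  let c12' := c12 - 4 * c22 + 3 * c23 in
  let c13' := c13 - 3 * c22 + 2 * c23 in
  let c33' := c22 - 2 * c23 + c33 in
  c13' < c12' -> c12' < - c33' -> - c33' < 0 ->
  chemical_graph n n.-1 (path_graph n) /\
  (forall e : rel 'I_n, chemical_graph n n.-1 e ->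
     topo_index c12 c13 c22 c23 c33 e
       <= topo_index c12 c13 c22 c23 c33 (path_graph n)
     /\ (topo_index c12 c13 c22 c23 c33 e
           = topo_index c12 c13 c22 c23 c33 (path_graph n) ->
         graph_iso e (path_graph n))).
Proof.
move=> Hn c12' c13' c33' H1 H2 H3; split; first exact: path_chem.
move=> e He.
have [A1 A2 A3 A4 A5] := tree_identities Hn He.
have [B1 B2 B3 B4 B5] := tree_identities Hn (path_chem n).
have P3 : ncls (path_graph n) 3 = 0%N.
  apply/eqP; rewrite cards_eq0; apply/eqP/setP => x; rewrite !inE.
  by have := path_deg x; case: (deg _ x) => [|[|[|[|m]]]].
have [P13 P33] := B5 P3.
rewrite P3 P13 P33 in B1 B2 B3.
have P12 : mij (path_graph n) 1 2 = 2%N by lia.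
have P22 : mij (path_graph n) 2 2 = (n - 3)%N by lia.
have P23 : mij (path_graph n) 2 3 = 0%N by lia.
have TP : topo_index c12 c13 c22 c23 c33 (path_graph n) = c12 * 2 + c22 * (n%:R - 3).
  rewrite /topo_index P12 P13 P22 P23 P33 natrB; last by lia.
  by rewrite !mulr0 !addr0.
have A1R := natR_eq R A1; have A2R := natR_eq R A2; have A3R := natR_eq R A3.
rewrite !natrD ?natrM in A1R A2R A3R.
have A4R : (mij e 3 3)%:R <= (ncls e 3)%:R :> R by rewrite ler_nat.
set X := (mij e 1 2)%:R : R in A1R A2R A3R *.
set Y := (mij e 1 3)%:R : R in A1R A2R A3R *.
set Z := (mij e 3 3)%:R : R in A1R A2R A3R A4R *.
set W := (ncls e 3)%:R : R in A3R A4R *.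
have M22 : (mij e 2 2)%:R = n%:R + 5 + Z - 4 * X - 3 * Y :> R by lra.
have M23 : (mij e 2 3)%:R = 3 * X + 2 * Y - 6 - 2 * Z :> R by lra.
have Hdiff : topo_index c12 c13 c22 c23 c33 e - topo_index c12 c13 c22 c23 c33 (path_graph n)
   = c12' * (X - 2) + c13' * Y + c33' * Z.
  by rewrite TP /topo_index M22 M23 -/X -/Y -/Z /c12' /c13' /c33'; ring.
case: (posnP (ncls e 3)) => HW.
  have [Y0 Z0] := A5 HW.
  have X2 : X = 2 by rewrite /X; rewrite HW Y0 in A3; rewrite (_ : mij e 1 2 = 2%N) //; lia.
  have Hd0 : topo_index c12 c13 c22 c23 c33 e = topo_index c12 c13 c22 c23 c33 (path_graph n).
    apply/eqP; rewrite -subr_eq0 Hdiff X2 /Y /Z Y0 Z0; apply/eqP; ring.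
  split; first by rewrite Hd0.
  move=> _; apply: iso_path => // x.
  case: He => _ _ _ Hd3; have := Hd3 x.
  have : x \notin [set x | deg e x == 3] by rewrite /ncls in HW; rewrite (cards0_eq HW) inE.
  by rewrite inE; case: (deg e x) => [|[|[|[|m]]]].
have Wpos : 0 < W by rewrite /W ltr0n.
have Y0 : 0 <= Y by rewrite /Y ler0n.
have F1 : (c13' - c12') * Y <= 0 by apply: mulr_le0_ge0 => //; lra.
have F2 : c33' * Z <= c33' * W by apply: ler_wpM2l => //; lra.
have F3 : (c12' + c33') * W < 0 by rewrite pmulr_llt0 //; lra.
have Hlt : c12' * (X - 2) + c13' * Y + c33' * Z < 0.
  have -> : X - 2 = W - Y by lra.
  have E : c12' * (W - Y) + c13' * Y + c33' * Z
    = (c12' + c33') * W + (c13' - c12') * Y + (c33' * Z - c33' * W) by ring.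
  rewrite E; lra.
split; first by rewrite -subr_le0 Hdiff ltW.
by move=> Heq; move: Hlt; rewrite -Hdiff Heq subrr ltxx.
Qed.
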